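(* Let $q$ be a prime power and $r\ge1$ an integer with $(r+1)\mid(q+1)$. Let $s$ be an integer with $2\le s\le\frac{q+1}{r+1}$ and $1\le t\le s$. Then there exists an $\mathbb{F}_q$-linear code of length $n=s(r+1)+1$, dimension $k=rt$ and locality $r$ whose minimum distance $d$ satisfies $d\ge n-rt-t+1$.
   Context: A linear code $C\subseteq\mathbb{F}_q^n$ has locality $r$ if for every coordinate $i$ there is a set $I_i\subseteq\{1,\dots,n\}\setminus\{i\}$ with $|I_i|\le r$ such that any two codewords agreeing on the coordinates in $I_i$ also agree in coordinate $i$. *)

(* Defs.v *)
From HB Require Import structures.
From mathcomp Require Import all_boot all_order all_algebra all_field.
Set Implicit Arguments. Unset Strict Implicit. Unset Printing Implicit Defensive.
Import GRing.Theory.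
Local Open Scope ring_scope.

Definition hamming_dist (F : fieldType) (n : nat) (x y : 'rV[F]_n) : nat :=
  #|[set i : 'I_n | x 0 i != y 0 i]|.

Definition has_locality (F : fieldType) (n : nat) (C : {vspace 'rV[F]_n})
    (r : nat) : Prop :=
  forall i : 'I_n, exists I : {set 'I_n},
    [/\ i \notin I, (#|I| <= r)%N &
        forall c1 c2, c1 \in C -> c2 \in C ->
          (forall j, j \in I -> c1 0 j = c2 0 j) -> c1 0 i = c2 0 i].

Definition min_dist_ge (F : fieldType) (n : nat) (C : {vspace 'rV[F]_n})
    (m : nat) : Prop :=
  forall c1 c2, c1 \in C -> c2 \in C -> c1 != c2 -> (m <= hamming_dist c1 c2)%N.

(* Main.v *)
Require Import Defs.
From HB Require Import structures.
From mathcomp Require Import all_boot all_order all_algebra all_field.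
From mathcomp Require Import zify ring.
From mathcomp Require cyclic.
Set Implicit Arguments. Unset Strict Implicit. Unset Printing Implicit Defensive.
Import GRing.Theory.
Local Open Scope ring_scope.

Lemma ext_exists (F : finFieldType) :
  exists (L : finFieldType) (iota : {rmorphism F -> L}),
    [/\ #|L| = (#|F| ^ 2)%N,
        (forall y : L, y ^+ #|F| = y -> exists c, y = iota c) &
        (forall x y : L, (x + y) ^+ #|F| = x ^+ #|F| + y ^+ #|F|)].
Proof.
pose m := (#|F| ^ 2)%N.
have F_gt1 : (1 < #|F|)%N := finNzRing_gt1 _.
have m_gt1: (m > 1)%N by rewrite /m (ltn_exp2l 0) .
have m_gt0 := ltnW m_gt1; have m1_gt0: (m.-1 > 0)%N by rewrite -ltnS prednK.
pose q (R : nzRingType) : {poly R} := 'X^m - 'X.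
have Dq R: q R = ('X^(m.-1) - 1) * ('X - 0).
  by rewrite subr0 mulrBl mul1r -exprSr prednK.
have /FinSplittingFieldFor[/= L splitLq]: q F != 0.
  by rewrite Dq monic_neq0 ?rpredM ?monicXsubC ?monicXnsubC.
rewrite [map_poly _ _]rmorphB rmorphXn /= map_polyX -/(q L) in splitLq.
have [p p_pr pcharFp] := finPcharP F.
have pcharL: p \in [pchar L] by rewrite pchar_lalg.
pose Fm := FinFieldExtType L.
have /finField_galois_generator[/= a _ Da]: (1 <= {:L})%VS by apply: sub1v.
pose Em := fixedSpace (a ^+ 2)%g; rewrite dimv1 expn1 in Da.
have{splitLq} [zs DqL defL] := splitLq.
have Uzs: uniq zs.
  rewrite -separable_prod_XsubC -(eqp_separable DqL) Dq separable_root andbC.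
  rewrite /root !hornerE subr_eq0 eq_sym expr0n gtn_eqF ?oner_eq0 //=.
  rewrite cyclotomic.separable_Xn_sub_1 // -subn1 natrB // subr_eq0.
  have lg : (0 < logn p #|F|)%N.
    by move: F_gt1; rewrite {1}(card_pprimeChar pcharFp); case: (logn p #|F|).
  have -> : (m%:R : L) = 0.
    rewrite /m (card_pprimeChar pcharFp) -expnM natrX pcharf0 // expr0n.
    by rewrite muln_eq0 orbF; move: lg; case: (logn _ _).
  by rewrite eq_sym oner_eq0.
have in_zs: zs =i Em.
  move=> z; rewrite -root_prod_XsubC -(eqp_root DqL) (sameP fixedSpaceP eqP).
  rewrite /root !hornerE subr_eq0 /= /m; congr (_ == z).
  rewrite expgS expg1 galM ?memvf // !Da ?memvf //.
  transitivity (z ^+ (#|F| * #|F|)); first by rewrite mulnn.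
  exact: exprM.
have defEm: Em = {:L}%VS.
  apply/eqP; rewrite eqEsubv subvf -defL -[Em]subfield_closed agenvS //.
  by rewrite subv_add sub1v; apply/span_subvP=> u; rewrite in_zs.
have allz : forall z : L, z ^+ m = z.
  move=> z; have : z \in zs by rewrite in_zs defEm memvf.
  rewrite -root_prod_XsubC -(eqp_root DqL) /root !hornerE subr_eq0.
  by move/eqP.
exists Fm, (in_alg L); split.
- suffices /eq_card->: Fm =i zs.
    apply: succn_inj; rewrite (card_uniqP _) //= -(size_prod_XsubC _ id).
    by rewrite -(eqp_size DqL) size_polyDl size_polyXn // size_polyN size_polyX.
  by move=> z; rewrite in_zs defEm memvf.
- move=> y yq.
  have : y \in (1%VS : {vspace L}).
    by rewrite (@Fermat's_little_theorem F L 1%AS y) /= dimv1 expn1 yq.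
  by case/vlineP=> k ->; exists k.
- move=> x y.
  rewrite (card_pprimeChar pcharFp).
  elim: (logn _ _) => // n IHn; rewrite expnSr !exprM {}IHn.
  by rewrite -!(pFrobenius_autE pcharL) rmorphD.
Qed.

Section Code.
Variables (F L : finFieldType) (iota : {rmorphism F -> L}).
Variables (r s t : nat) (g : L).
Local Notation q := #|F|.
Hypothesis cardL : #|L| = (q ^ 2)%N.
Hypothesis fixF : forall y : L, y ^+ q = y -> exists c, y = iota c.
Hypothesis frobD : forall x y : L, (x + y) ^+ q = x ^+ q + y ^+ q.
Hypotheses (r_gt0 : (0 < r)%N) (dvd_r : (r.+1 %| q.+1)%N) (s_ge2 : (2 <= s)%N)
  (sq : (s * r.+1 <= q.+1)%N) (t_gt0 : (0 < t)%N) (ts : (t <= s)%N).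
Hypothesis g_prim : (q ^ 2).-1.-primitive_root g.

Local Notation II := ('I_r * 'I_t)%type.
Definition NN := (s * r.+1)%N.
Definition s0 := (q.+1 %/ r.+1)%N.
Definition DD := (t * r.+1 - 2)%N.
Definition zz := g ^+ q.-1.
Definition ex (k : nat) := (k %/ r.+1 + (k %% r.+1) * s0)%N.
Definition wp (k : nat) := zz ^+ ex k.
Definition mu (k : nat) := g ^+ (ex k * DD).
Definition ia (il : II) : nat := (il.1 + r.+1 * il.2)%N.
Definition cj (il : II) : II := (rev_ord il.1, rev_ord il.2).
Definition Qw (x : 'M[F]_(r, t)) (w : L) := \sum_(il : II) iota (x il.1 il.2) * w ^+ ia il.
Definition Tr (y : L) := y + y ^+ q.
Definition VV x k := Tr (mu k * g * Qw x (wp k)).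
Definition finv (y : L) : F := odflt 0 [pick c | iota c == y].
Definition enc (x : 'M[F]_(r, t)) : 'rV[F]_(NN.+1) :=
  \row_(k < NN.+1) (if (k < NN)%N then finv (VV x k) else 0).
Definition core x w :=
  g * (\sum_(il : II) iota (x il.1 il.2) * w ^+ ia il) +
  g ^+ q * (\sum_(il : II) iota (x il.1 il.2) * w ^+ (DD - ia il)).

Lemma q_gt1 : (1 < q)%N. Proof. exact: finNzRing_gt1. Qed.

Lemma allq2 (y : L) : y ^+ (q ^ 2) = y.
Proof. by rewrite -cardL expf_card. Qed.

Lemma frob0 : (0 : L) ^+ q = 0.
Proof. by rewrite expr0n; have := q_gt1; case: (q). Qed.

Lemma frob_sum (I : finType) (f : I -> L) :
  (\sum_i f i) ^+ q = \sum_i f i ^+ q.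
Proof. exact: (big_morph (fun y => y ^+ q) frobD frob0). Qed.

Lemma iotaq c : iota c ^+ q = iota c.
Proof. by rewrite -rmorphXn expf_card. Qed.

Lemma Tr_in y : exists c, Tr y = iota c.
Proof.
apply: fixF; rewrite /Tr frobD -exprM mulnn allq2 addrC //.
Qed.

Lemma finvK y : iota (finv (Tr y)) = Tr y.
Proof.
rewrite /finv; case: pickP => [c /eqP //|H].
by have [c Hc] := Tr_in y; move: (H c); rewrite Hc eqxx.
Qed.

Lemma Tr_lin a u v : Tr (iota a * u + v) = iota a * Tr u + Tr v.
Proof. by rewrite /Tr frobD exprMn iotaq; ring. Qed.

Lemma Qw_lin a x y w : Qw (a *: x + y) w = iota a * Qw x w + Qw y w.
Proof.
rewrite /Qw mulr_sumr -big_split /=; apply: eq_bigr => il _.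
by rewrite !mxE rmorphD rmorphM /=; ring.
Qed.

Lemma VV_lin a x y k : VV (a *: x + y) k = iota a * VV x k + VV y k.
Proof.
by rewrite /VV Qw_lin -Tr_lin; congr Tr; ring.
Qed.

Lemma enc_iota x (k : 'I_NN.+1) :
  iota (enc x 0 k) = if (k < NN)%N then VV x k else 0.
Proof. by rewrite mxE; case: ifP => _; rewrite ?rmorph0 ?finvK. Qed.

Lemma enc_is_linear : linear enc.
Proof.
move=> a x y; apply/rowP => k; rewrite !mxE.
case: ifP => kN; last by rewrite mulr0 addr0.
have E : forall x, iota (finv (VV x k)) = VV x k by move=> x'; exact: finvK.
by apply: (fmorph_inj iota); rewrite rmorphD rmorphM /= !E VV_lin.
Qed.

Lemma q21 : ((q ^ 2).-1 = q.-1 * q.+1)%N.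
Proof. have := q_gt1; case: q => // p _; rewrite expnS expn1; lia. Qed.

Lemma q21_gt0 : (0 < (q ^ 2).-1)%N.
Proof. rewrite q21; have := q_gt1; case: q => // p; lia. Qed.

Lemma g_neq0 : g != 0.
Proof.
apply/negP => /eqP g0; have := prim_expr_order g_prim.
by rewrite g0 expr0n; case: ((q ^ 2).-1) q21_gt0 => // n _ /eqP; rewrite eq_sym oner_eq0.
Qed.

Lemma zz_prim : (q.+1).-primitive_root zz.
Proof.
have := dvdn_prim_root g_prim (_ : (q.+1 %| (q ^ 2).-1)%N).
rewrite q21 mulnK // /zz; apply; exact: dvdn_mull.
Qed.

Lemma wp_q1 k : wp k ^+ q.+1 = 1.
Proof. by rewrite /wp -exprM mulnC exprM (prim_expr_order zz_prim) expr1n. Qed.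

Lemma wp_neq0 k : wp k != 0.
Proof. by rewrite /wp /zz -exprM expf_neq0 // g_neq0. Qed.

Lemma mu_q k : mu k ^+ q = mu k * wp k ^+ DD.
Proof.
rewrite /mu /wp /zz -!exprM -exprD; congr (g ^+ _).
have := q_gt1; case: q => // p _; rewrite /=; lia.
Qed.

Lemma ia_le il : (ia il <= DD)%N.
Proof.
case: il => [i l] /=; rewrite /ia /DD /=.
have := ltn_ord i; have := ltn_ord l; nia.
Qed.

Lemma key k a : (a <= DD)%N -> mu k ^+ q * (wp k ^+ a) ^+ q = mu k * wp k ^+ (DD - a).
Proof.
move=> aD; apply: (mulIf (expf_neq0 a (wp_neq0 k))).
rewrite mu_q -!mulrA -exprD subnK //.
have -> : (wp k ^+ a) ^+ q * wp k ^+ a = 1.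
  by rewrite -exprSr -exprM mulnC exprM wp_q1 expr1n.
by rewrite mulr1.
Qed.

Lemma VV_core x k : VV x k = mu k * core x (wp k).
Proof.
rewrite /VV /Tr /core /Qw !exprMn frob_sum mulrDr; congr (_ + _); first ring.
rewrite !mulr_sumr; apply: eq_bigr => il _.
rewrite exprMn iotaq.
transitivity (g ^+ q * iota (x il.1 il.2) * (mu k ^+ q * (wp k ^+ ia il) ^+ q)); first ring.
rewrite key ?ia_le //; ring.
Qed.

Definition Ppoly (x : 'M[F]_(r, t)) : {poly L} :=
  g *: (\sum_(il : II) iota (x il.1 il.2) *: 'X^(ia il)) +
  g ^+ q *: (\sum_(il : II) iota (x il.1 il.2) *: 'X^(DD - ia il)).

Lemma Ppoly_horner x w : (Ppoly x).[w] = core x w.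
Proof.
rewrite /Ppoly /core hornerD !hornerZ !horner_sum; congr (_ * _ + _ * _);
  by apply: eq_bigr => il _; rewrite hornerZ hornerXn.
Qed.

Lemma size_sum_le (I : finType) (f : I -> {poly L}) m :
  (forall i, (size (f i) <= m)%N) -> (size (\sum_i f i)%R <= m)%N.
Proof.
move=> H; apply: (big_ind (fun p : {poly L} => size p <= m)%N) => //.
  by rewrite size_poly0.
by move=> p1 p2 h1 h2; apply: leq_trans (size_polyD _ _) _; rewrite geq_max h1.
Qed.

Lemma size_term (c : L) e m : (e < m)%N -> (size (c *: 'X^e) <= m)%N.
Proof. by move=> em; apply: leq_trans (size_scale_leq _ _) _; rewrite size_polyXn. Qed.

Lemma size_Ppoly x : (size (Ppoly x) <= DD.+1)%N.
Proof.
apply: leq_trans (size_polyD _ _) _; rewrite geq_max.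
apply/andP; split; apply: leq_trans (size_scale_leq _ _) _;
  apply: size_sum_le => il; apply: size_term; rewrite ltnS ?leq_subr ?ia_le //.
Qed.

Lemma coef_Ppoly x b : (Ppoly x)`_b =
  g * \sum_(il : II) iota (x il.1 il.2) * (ia il == b)%:R +
  g ^+ q * \sum_(il : II) iota (x il.1 il.2) * ((DD - ia il)%N == b)%:R.
Proof.
rewrite /Ppoly coefD !coefZ !coef_sum; congr (_ * _ + _ * _);
  by apply: eq_bigr => il _; rewrite coefZ coefXn eq_sym.
Qed.

Lemma sum_pick (f : II -> L) (P : pred II) il0 :
  (forall il, P il = (il == il0)) -> \sum_il f il * (P il)%:R = f il0.
Proof.
move=> HP; rewrite (bigD1 il0) //= HP eqxx mulr1 big1 ?addr0 // => il ne.
by rewrite HP (negbTE ne) mulr0.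
Qed.

Lemma ia_mod il : (ia il %% r.+1 = il.1)%N.
Proof. by rewrite /ia mulnC addnC modnMDl modn_small // ltnS ltnW. Qed.

Lemma ia_div il : (ia il %/ r.+1 = il.2)%N.
Proof. by rewrite /ia mulnC addnC divnMDl // divn_small ?addn0 // ltnS ltnW. Qed.

Lemma ia_inj : injective ia.
Proof.
move=> [i l] [i' l'] E.
have := ia_mod (i, l); have := ia_div (i, l); rewrite E ia_mod ia_div /=.
by move=> e2 e1; rewrite (val_inj e1) (val_inj e2).
Qed.

Lemma ia_cj il : (DD - ia il = ia (cj il))%N.
Proof.
case: il => [i l]; rewrite /ia /cj /DD /=.
have := ltn_ord i; have := ltn_ord l; nia.
Qed.

Lemma cjK : involutive cj.
Proof. by case=> i l; rewrite /cj /= !rev_ordK. Qed.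

Lemma cj_eq il il0 : ((DD - ia il)%N == ia il0) = (il == cj il0).
Proof.
rewrite ia_cj; apply/eqP/eqP => [E|->]; last by rewrite cjK.
by move/ia_inj: E => <-; rewrite cjK.
Qed.

Lemma g2ne : g ^+ 2 != (g ^+ q) ^+ 2.
Proof.
have q1 := q_gt1.
rewrite -exprM (eq_prim_root_expr g_prim) eq_sym eqn_mod_dvd; last by lia.
apply/negP => /dvdn_leq h2; rewrite q21 in h2.
have : (q.-1 * q.+1 <= q * 2 - 2)%N by apply: h2; lia.
nia.
Qed.

Lemma sumA x il0 :
  \sum_(il : II) iota (x il.1 il.2) * (ia il == ia il0)%:R = iota (x il0.1 il0.2).
Proof.
by apply: (@sum_pick (fun il => iota (x il.1 il.2))) => il; apply/eqP/eqP => [/ia_inj|->].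
Qed.

Lemma sumB x il0 :
  \sum_(il : II) iota (x il.1 il.2) * ((DD - ia il)%N == ia il0)%:R =
  iota (x (cj il0).1 (cj il0).2).
Proof.
by apply: (@sum_pick (fun il => iota (x il.1 il.2))) => il; rewrite cj_eq.
Qed.

Lemma Ppoly_eq0 x : Ppoly x = 0 -> x = 0.
Proof.
move=> P0; apply/matrixP => i l; set il0 := (i, l).
have c1 := congr1 (fun p : {poly L} => p`_(ia il0)) P0.
have c2 := congr1 (fun p : {poly L} => p`_(ia (cj il0))) P0.
rewrite /= !coef_Ppoly coef0 !sumA !sumB cjK in c1 c2.
set X0 := iota (x il0.1 il0.2) in c1 c2.
set X1 := iota (x (cj il0).1 (cj il0).2) in c1 c2.
have E : (g ^+ 2 - (g ^+ q) ^+ 2) * X0 =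
  g * (g * X0 + g ^+ q * X1) - g ^+ q * (g * X1 + g ^+ q * X0) by ring.
rewrite coef0 in c2; rewrite c1 c2 !mulr0 subrr in E.
move/eqP: E; rewrite mulf_eq0 subr_eq0 (negbTE g2ne) /= fmorph_eq0 => /eqP ->.
by rewrite mxE.
Qed.

Lemma s0_gt0 : (0 < s0)%N.
Proof.
rewrite /s0 divn_gt0 //; apply: dvdn_leq => //.
Qed.

Lemma s0r : (s0 * r.+1 = q.+1)%N.
Proof. by rewrite /s0 divnK. Qed.

Lemma s_le_s0 : (s <= s0)%N.
Proof. by rewrite -(leq_pmul2r (ltn0Sn r)) s0r. Qed.

Lemma div_lt k : (k < NN)%N -> (k %/ r.+1 < s)%N.
Proof. by rewrite ltn_divLR. Qed.

Lemma ex_lt k : (k < NN)%N -> (ex k < q.+1)%N.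
Proof.
move=> kN; have j1 := div_lt kN; have m1 : (k %% r.+1 < r.+1)%N by rewrite ltn_mod.
have := s_le_s0; rewrite -s0r /ex; nia.
Qed.

Lemma ex_mod k : (k < NN)%N -> (ex k %% s0 = k %/ r.+1)%N.
Proof.
move=> kN; rewrite /ex addnC modnMDl modn_small //.
exact: leq_trans (div_lt kN) s_le_s0.
Qed.

Lemma ex_div k : (k < NN)%N -> (ex k %/ s0 = k %% r.+1)%N.
Proof.
move=> kN; rewrite /ex addnC divnMDl ?s0_gt0 // divn_small ?addn0 //.
exact: leq_trans (div_lt kN) s_le_s0.
Qed.

Lemma wp_inj k k' : (k < NN)%N -> (k' < NN)%N -> wp k = wp k' -> k = k'.
Proof.
move=> kN kN' /eqP; rewrite /wp (eq_prim_root_expr zz_prim) !modn_small ?ex_lt //.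
move=> /eqP E; rewrite (divn_eq k r.+1) (divn_eq k' r.+1).
by rewrite -(ex_mod kN) -(ex_div kN) E ex_mod ?ex_div.
Qed.

Lemma wp_grp k : wp k ^+ r.+1 = zz ^+ (k %/ r.+1 * r.+1).
Proof.
rewrite /wp /ex -exprM mulnDl exprD -mulnA s0r (mulnC (k %% r.+1)%N).
by rewrite [zz ^+ (_ * (k %% r.+1)%N)]exprM (prim_expr_order zz_prim) expr1n mulr1.
Qed.

Definition Rpoly (x : 'M[F]_(r, t)) (G : L) : {poly L} :=
  g *: (\sum_(il : II) (iota (x il.1 il.2) * G ^+ il.2) *: 'X^(il.1)) +
  g ^+ q *: (\sum_(il : II) (iota (x il.1 il.2) * G ^+ (rev_ord il.2)) *: 'X^(rev_ord il.1)).

Lemma size_Rpoly x G : (size (Rpoly x G) <= r)%N.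
Proof.
apply: leq_trans (size_polyD _ _) _; rewrite geq_max.
by apply/andP; split; apply: leq_trans (size_scale_leq _ _) _;
  apply: size_sum_le => il; apply: size_term.
Qed.

Lemma Rpoly_horner x G w : w ^+ r.+1 = G -> (Rpoly x G).[w] = core x w.
Proof.
move=> wG; rewrite /Rpoly /core hornerD !hornerZ !horner_sum.
congr (_ * _ + _ * _); apply: eq_bigr => il _; rewrite hornerZ hornerXn.
  by rewrite /ia exprD exprM -wG; ring.
by rewrite ia_cj /ia /= exprD exprM -wG; ring.
Qed.

Lemma core_wp (x : 'M[F]_(r, t)) k : VV x k = 0 -> core x (wp k) = 0.
Proof.
rewrite VV_core => /eqP; rewrite mulf_eq0 => /orP[|/eqP //].
by rewrite /mu expf_eq0 (negbTE g_neq0) andbF.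
Qed.

Lemma wp_core (x : 'M[F]_(r, t)) k : core x (wp k) = 0 -> VV x k = 0.
Proof. by rewrite VV_core => ->; rewrite mulr0. Qed.

Lemma loc_main (x : 'M[F]_(r, t)) k : (k < NN)%N ->
  (forall m, (m < r.+1)%N -> m != (k %% r.+1)%N -> VV x (k %/ r.+1 * r.+1 + m) = 0) ->
  VV x k = 0.
Proof.
move=> kN H; set j := (k %/ r.+1)%N; set G := zz ^+ (j * r.+1).
have jm_lt m : (m < r.+1)%N -> (j * r.+1 + m < NN)%N.
  by move=> mr; have := div_lt kN; rewrite /NN -/j; nia.
have jm_div m : (m < r.+1)%N -> ((j * r.+1 + m) %/ r.+1 = j)%N.
  by move=> mr; rewrite divnMDl // divn_small ?addn0.
set m0 : 'I_r.+1 := Ordinal (ltn_pmod k (ltn0Sn r)).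
set rs := [seq wp (j * r.+1 + val m) | m <- enum [set~ m0]].
have Rz : Rpoly x G = 0.
  apply/eqP; apply: contraT => R0.
  have := max_poly_roots R0 _ _.
  move=> /(_ rs) H1.
  have : (size rs < size (Rpoly x G))%N.
    apply: H1.
    - apply/allP => w /mapP[m mm ->]; rewrite rootE Rpoly_horner.
        apply/eqP/core_wp/H; first exact: ltn_ord.
        move: mm; rewrite mem_enum in_setC1; apply: contra => /eqP E.
        by apply/eqP; apply: val_inj; exact: E.
      by rewrite wp_grp jm_div //; exact: ltn_ord.
    - rewrite map_inj_in_uniq ?enum_uniq // => m1 m2 _ _ E.
      have := wp_inj (jm_lt _ (ltn_ord m1)) (jm_lt _ (ltn_ord m2)) E.
      by move/eqP; rewrite eqn_add2l => /eqP E'; apply: val_inj.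
  by rewrite size_map -cardE cardsC1 card_ord /= ltnNge size_Rpoly.
apply: wp_core; rewrite -(@Rpoly_horner _ G) ?Rz ?horner0 //.
by rewrite wp_grp.
Qed.

Lemma enc_sub x1 x2 : enc (x1 - x2) = enc x1 - enc x2.
Proof.
have -> : x1 - x2 = (-1) *: x2 + x1 by rewrite scaleN1r addrC.
by rewrite enc_is_linear scaleN1r addrC.
Qed.

Lemma enc_eq0 x (k : 'I_NN.+1) : (enc x 0 k == 0) = ((k < NN)%N ==> (VV x k == 0)).
Proof.
by rewrite -(fmorph_eq0 iota) enc_iota; case: ifP => //; rewrite eqxx.
Qed.

Lemma mu_neq0 k : mu k != 0.
Proof. by rewrite /mu expf_neq0 // g_neq0. Qed.

Lemma zeros_bound x : x != 0 ->
  (#|[set k : 'I_NN.+1 | (enc x 0 k == 0)%R]| <= DD.+1)%N.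
Proof.
move=> x0; set Z := [set k : 'I_NN.+1 | (k < NN)%N && (enc x 0 k == 0)].
have sub : [set k : 'I_NN.+1 | enc x 0 k == 0] \subset ord_max |: Z.
  apply/subsetP => k; rewrite !inE; case: (ltnP k NN) => kN /=.
    by move=> ->; rewrite orbT.
  by move=> _; apply/orP; left; apply/eqP/val_inj => /=; have := ltn_ord k; lia.
apply: leq_trans (subset_leq_card sub) _; rewrite cardsU1.
have : (#|Z| <= DD)%N; last by case: (_ \notin _) => /=; lia.
set rs := [seq wp (val k) | k <- enum Z].
have P0 : Ppoly x != 0 by apply: contra x0 => /eqP /Ppoly_eq0 ->.
have := max_poly_roots P0 (_ : all (root (Ppoly x)) rs) (_ : uniq rs).
rewrite size_map -cardE => H.
have : (#|Z| < DD.+1)%N.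
  apply: leq_trans (size_Ppoly x); apply: H.
  - apply/allP => w /mapP[k]; rewrite mem_enum inE => /andP[kN e0] ->.
    rewrite rootE Ppoly_horner; apply/eqP/core_wp; apply/eqP.
    by move: e0; rewrite enc_eq0 kN.
  - rewrite map_inj_in_uniq ?enum_uniq // => k1 k2.
    rewrite !mem_enum !inE => /andP[k1N _] /andP[k2N _] E.
    by apply: val_inj; apply: wp_inj.
by [].
Qed.

Lemma DD_lt : (DD < NN)%N.
Proof.
rewrite /DD /NN; have := leq_mul ts (leqnn r.+1); nia.
Qed.

Definition encL : {linear 'M[F]_(r, t) -> 'rV[F]_(NN.+1)} :=
  HB.pack enc (GRing.isLinear.Build _ _ _ _ enc enc_is_linear).

Lemma final : exists C : {vspace 'rV[F]_(NN.+1)},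
  [/\ \dim C = (r * t)%N, has_locality C r & min_dist_ge C (NN.+1 - r * t - t + 1)%N].
Proof.
have enc_inj : injective enc.
  move=> x1 x2 E; apply/eqP; rewrite -subr_eq0; apply/negP => /negP nz.
  have := zeros_bound nz; rewrite enc_sub E subrr.
  have -> : [set k : 'I_NN.+1 | (0 : 'rV[F]_(NN.+1)) 0 k == 0] = [set: 'I_NN.+1].
    by apply/setP => k; rewrite !inE mxE eqxx.
  by rewrite cardsT card_ord ltnS leqNgt DD_lt.
set f := linfun encL.
have fE : forall x, f x = enc x by move=> x; rewrite lfunE.
have memC c : c \in limg f -> exists x, c = enc x.
  by case/memv_imgP => x _ ->; exists x.
exists (limg f); split.
- rewrite limg_dim_eq ?dimvf //.
  apply/eqP; rewrite capfv; apply/lker0P => x y; rewrite !fE; exact: enc_inj.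
- move=> k; case: (ltnP k NN) => kN; last first.
    exists set0; rewrite inE cards0; split => // c1 c2 /memC[x1 ->] /memC[x2 ->] _.
    by rewrite !mxE ltnNge kN.
  set j := (k %/ r.+1)%N.
  set m0 : 'I_r.+1 := Ordinal (ltn_pmod k (ltn0Sn r)).
  have jm_lt m : (m < r.+1)%N -> (j * r.+1 + m < NN)%N.
    by move=> mr; have := div_lt kN; rewrite /NN -/j; nia.
  have jm_val (m : 'I_r.+1) : nat_of_ord (inord (j * r.+1 + m) : 'I_NN.+1) = (j * r.+1 + m)%N.
    by rewrite inordK // ltnS ltnW // jm_lt.
  exists ((fun m : 'I_r.+1 => (inord (j * r.+1 + m) : 'I_NN.+1)) @: [set~ m0]); split.
  + apply/imsetP => [[m mm /(congr1 (@nat_of_ord _))]]; rewrite jm_val => E.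
    move: mm; rewrite in_setC1 => /negP; apply; apply/eqP/val_inj => /=.
    by rewrite E modnMDl modn_small.
  + by apply: leq_trans (leq_imset_card _ _) _; rewrite cardsC1 card_ord.
  + move=> c1 c2 /memC[x1 ->] /memC[x2 ->] agree.
    apply/eqP; rewrite -subr_eq0; have -> : enc x1 0 k - enc x2 0 k = enc (x1 - x2) 0 k.
      by rewrite enc_sub !mxE.
    rewrite enc_eq0 kN /=; apply/eqP; apply: loc_main => // m mr mk.
    have Hin : (inord (j * r.+1 + m) : 'I_NN.+1) \in
        ((fun m : 'I_r.+1 => (inord (j * r.+1 + m) : 'I_NN.+1)) @: [set~ m0]).
      apply/imsetP; exists (Ordinal mr) => //.
      by rewrite in_setC1; exact: mk.
    have := agree _ Hin; move/eqP; rewrite -subr_eq0.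
    have -> : enc x1 0 (inord (j * r.+1 + m)) - enc x2 0 (inord (j * r.+1 + m)) =
              enc (x1 - x2) 0 (inord (j * r.+1 + m)) by rewrite enc_sub !mxE.
    by rewrite enc_eq0 (jm_val (Ordinal mr)) jm_lt //= => /eqP.
- move=> c1 c2 /memC[x1 ->] /memC[x2 ->] ne.
  have nz : x1 - x2 != 0.
    by apply: contra ne; rewrite subr_eq0 => /eqP ->.
  have := zeros_bound nz; rewrite /hamming_dist.
  have -> : [set i : 'I_NN.+1 | enc x1 0 i != enc x2 0 i] =
            ~: [set k : 'I_NN.+1 | enc (x1 - x2) 0 k == 0].
    by apply/setP => k; rewrite !inE enc_sub !mxE subr_eq0.
  set Z := [set k : 'I_NN.+1 | enc (x1 - x2) 0 k == 0] => H.
  have HC := cardsC Z; rewrite card_ord in HC.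
  have := leq_mul ts (leqnn r); have := ltnW DD_lt.
  rewrite /DD /NN in H HC *; nia.
Qed.

End Code.

Theorem mainTheorem5 (F : finFieldType) (q r s t : nat) :
  #|F| = q ->
  (1 <= r)%N ->
  (r.+1 %| q.+1)%N ->
  (2 <= s)%N -> (s * r.+1 <= q.+1)%N ->
  (1 <= t <= s)%N ->
  exists C : {vspace 'rV[F]_(s * r.+1).+1},
    [/\ \dim C = (r * t)%N,
        has_locality C r &
        min_dist_ge C ((s * r.+1).+1 - r * t - t + 1)%N].
Proof.
move=> <- r1 dvd s2 sq /andP[t1 ts].
have [L [iota [cardL fixF frobD]]] := ext_exists F.
have q1 : (1 < #|F|)%N := finNzRing_gt1 _.
have n_gt0 : (0 < (#|F| ^ 2).-1)%N by rewrite -ltnS prednK ?expn_gt0 ?(ltnW q1) //; nia.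
have [g g_prim] : exists g : L, (#|F| ^ 2).-1.-primitive_root g.
  have := @cyclic.has_prim_root L _ (enum (predC1 (0 : L))) n_gt0.
  case/(_ _ _ _)/hasP => [||| g _ pg]; last by exists g.
  - apply/allP => x; rewrite mem_enum /= => x0; rewrite unity_rootE.
    apply/eqP; apply: (mulIf x0); rewrite mul1r -exprSr prednK ?expn_gt0 ?(ltnW q1) //.
    by rewrite -cardL expf_card.
  - exact: enum_uniq.
  - by rewrite -cardE cardC1 cardL.
exact: (final cardL fixF frobD r1 dvd s2 sq t1 ts g_prim).
Qed.
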